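(* Let $(\mathfrak{n},J,\langle\cdot,\cdot\rangle)$ be a Hermitian real nilpotent Lie algebra with $\dim\mathfrak{n}=2d$ and $\dim[\mathfrak{n},\mathfrak{n}]=1$. Then $\langle\cdot,\cdot\rangle$ is pluriclosed if and only if $\mathfrak{n}$ is isomorphic to $\mathbb{R}^{2d-3}\oplus\mathfrak{h}_3$.
   Context: $\mathfrak{h}_{2m+1}$ is the Heisenberg Lie algebra with basis $x_1,\dots,x_m,y_1,\dots,y_m,z$ and nonzero brackets $[x_i,y_i]=-[y_i,x_i]=z$; $\mathbb{R}^k$ denotes the $k$-dimensional abelian Lie algebra. A complex structure is a linear map $J$ with $J^2=-I$ and $[x,y]+J([Jx,y]+[x,Jy])-[Jx,Jy]=0$ for all $x,y$; $\langle\cdot,\cdot\rangle$ is Hermitian if $\langle Jx,Jy\rangle=\langle x,y\rangle$. Torsion 3-form: $c(x,y,z)=-\langle[Jx,Jy],z\rangle-\langle[Jy,Jz],x\rangle-\langle[Jz,Jx],y\rangle$; $\langle\cdot,\cdot\rangle$ is pluriclosed if $dc=0$ for the Chevalley–Eilenberg differential $d$. *)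

(* Defs.v *)
From HB Require Import structures.
From mathcomp Require Import all_boot all_order all_algebra.
From mathcomp Require Import reals.
Set Implicit Arguments. Unset Strict Implicit. Unset Printing Implicit Defensive.
Import Order.TTheory GRing.Theory Num.Theory.
Local Open Scope ring_scope.

Section Defs.
Variable R : realType.

Definition is_lie_bracket (n : nat) (br : 'rV[R]_n -> 'rV[R]_n -> 'rV[R]_n) : Prop :=
  [/\ (forall (a : R) x y z, br (a *: x + y) z = a *: br x z + br y z),
      (forall (a : R) x y z, br x (a *: y + z) = a *: br x y + br x z),
      (forall x y, br x y = - br y x) &
      (forall x y z, br x (br y z) + br y (br z x) + br z (br x y) = 0)].

(* lcs_elt br k xs = [x_k,[x_{k-1},[...,[x_1,x_0]]]]; these span C^{k+1} *)
Fixpoint lcs_elt (n : nat) (br : 'rV[R]_n -> 'rV[R]_n -> 'rV[R]_n)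
    (k : nat) (xs : nat -> 'rV[R]_n) : 'rV[R]_n :=
  match k with
  | 0 => xs 0%N
  | k'.+1 => br (xs k) (lcs_elt br k' xs)
  end.

Definition is_nilpotent (n : nat) (br : 'rV[R]_n -> 'rV[R]_n -> 'rV[R]_n) : Prop :=
  exists k : nat, forall xs : nat -> 'rV[R]_n, lcs_elt br k xs = 0.

Definition derived_dim_one (n : nat) (br : 'rV[R]_n -> 'rV[R]_n -> 'rV[R]_n) : Prop :=
  exists z : 'rV[R]_n, z != 0 /\
    (forall x y, exists a : R, br x y = a *: z) /\
    (exists x y, br x y = z).

(* integrable complex structure; J acts on row vectors by x |-> x *m J *)
Definition is_complex_structure (n : nat) (br : 'rV[R]_n -> 'rV[R]_n -> 'rV[R]_n)
    (J : 'M[R]_n) : Prop :=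
  J *m J = - 1%:M /\
  forall x y, br x y + (br (x *m J) y + br x (y *m J)) *m J - br (x *m J) (y *m J) = 0.

Definition is_inner_product (n : nat) (ip : 'rV[R]_n -> 'rV[R]_n -> R) : Prop :=
  [/\ (forall (a : R) x y z, ip (a *: x + y) z = a * ip x z + ip y z),
      (forall x y, ip x y = ip y x) &
      (forall x, x != 0 -> 0 < ip x x)].

Definition is_hermitian (n : nat) (J : 'M[R]_n) (ip : 'rV[R]_n -> 'rV[R]_n -> R) : Prop :=
  forall x y, ip (x *m J) (y *m J) = ip x y.

Definition torsion (n : nat) (br : 'rV[R]_n -> 'rV[R]_n -> 'rV[R]_n) (J : 'M[R]_n)
    (ip : 'rV[R]_n -> 'rV[R]_n -> R) (x y z : 'rV[R]_n) : R :=
  - ip (br (x *m J) (y *m J)) z - ip (br (y *m J) (z *m J)) x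
  - ip (br (z *m J) (x *m J)) y.

(* Chevalley--Eilenberg differential of a 3-form:
   dc(x0,x1,x2,x3) = sum_{i<j} (-1)^(i+j) c([xi,xj], ...) *)
Definition CE_d3 (n : nat) (br : 'rV[R]_n -> 'rV[R]_n -> 'rV[R]_n)
    (c : 'rV[R]_n -> 'rV[R]_n -> 'rV[R]_n -> R) (x0 x1 x2 x3 : 'rV[R]_n) : R :=
  - c (br x0 x1) x2 x3 + c (br x0 x2) x1 x3 - c (br x0 x3) x1 x2
  - c (br x1 x2) x0 x3 + c (br x1 x3) x0 x2 - c (br x2 x3) x0 x1.

Definition is_pluriclosed (n : nat) (br : 'rV[R]_n -> 'rV[R]_n -> 'rV[R]_n)
    (J : 'M[R]_n) (ip : 'rV[R]_n -> 'rV[R]_n -> R) : Prop :=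
  forall x0 x1 x2 x3, CE_d3 br (torsion br J ip) x0 x1 x2 x3 = 0.

Definition lie_isomorphic (m n : nat)
    (br1 : 'rV[R]_m -> 'rV[R]_m -> 'rV[R]_m)
    (br2 : 'rV[R]_n -> 'rV[R]_n -> 'rV[R]_n) : Prop :=
  exists f : 'rV[R]_m -> 'rV[R]_n,
    [/\ (forall (a : R) x y, f (a *: x + y) = a *: f x + f y),
        bijective f &
        (forall x y, f (br1 x y) = br2 (f x) (f y))].

(* R^k (+) h_3 on 'rV_(k+3): basis x = e_0, y = e_1, z = e_2 of h_3,
   e_3..e_(k+2) abelian; only nonzero bracket [x,y] = -[y,x] = z *)
Definition abelian_plus_h3_bracket (k : nat) (u v : 'rV[R]_(k.+3)) : 'rV[R]_(k.+3) :=
  (u 0 (inord 0) * v 0 (inord 1) - u 0 (inord 1) * v 0 (inord 0))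
    *: delta_mx 0 (inord 2).

End Defs.

(* Main.v *)
Require Import Defs.
From HB Require Import structures.
From mathcomp Require Import all_boot all_order all_algebra.
From mathcomp Require Import reals ring lra.
Set Implicit Arguments. Unset Strict Implicit. Unset Printing Implicit Defensive.
Import Order.TTheory GRing.Theory Num.Theory.
Local Open Scope ring_scope.

Section S.
Variable R : realType.

Definition Pl n (w : 'rV[R]_n -> 'rV[R]_n -> R) :=
  forall a b c e, w a b * w c e - w a c * w b e + w a e * w b c = 0.

Lemma xx0 (x : R) : x = x + x -> x = 0.
Proof. lra. Qed.

Lemma lin_sum n (phi : 'rV[R]_n -> R) :
  (forall (a : R) u v, phi (a *: u + v) = a * phi u + phi v) ->
  forall w, phi w = \sum_j w 0 j * phi (delta_mx 0 j).
Proof.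
move=> Hl w.
have H0 : phi 0 = 0.
  by apply: xx0; have := Hl 1 0 0; rewrite scaler0 addr0 mul1r.
rewrite {1}(row_sum_delta w).
elim/big_rec2: _ => // j s t _ <-.
by rewrite Hl.
Qed.

Section Alg.
Variables (n : nat) (br : 'rV[R]_n -> 'rV[R]_n -> 'rV[R]_n) (J : 'M[R]_n)
  (ip : 'rV[R]_n -> 'rV[R]_n -> R) (w : 'rV[R]_n -> 'rV[R]_n -> R) (z : 'rV[R]_n).
Hypothesis brE : forall a b, br a b = w a b *: z.
Hypothesis wDl : forall (c : R) a b e, w (c *: a + b) e = c * w a e + w b e.
Hypothesis wsk : forall a b, w a b = - w b a.
Hypothesis wz : forall a, w a z = 0.
Hypothesis wJ : forall a b, w (a *m J) (b *m J) = w a b.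
Hypothesis ipDl : forall (c : R) a b e, ip (c *: a + b) e = c * ip a e + ip b e.
Hypothesis ipsym : forall a b, ip a b = ip b a.

Lemma wZl c a b : w (c *: a) b = c * w a b.
Proof.
have H0 : w 0 b = 0 by apply: xx0; have := wDl 1 0 0 b; rewrite scaler0 addr0 mul1r.
by have := wDl c a 0 b; rewrite addr0 H0 addr0.
Qed.

Lemma wZr c a b : w a (c *: b) = c * w a b.
Proof. by rewrite wsk wZl wsk mulrN opprK. Qed.

Lemma ipZl c a b : ip (c *: a) b = c * ip a b.
Proof.
have H0 : ip 0 b = 0 by apply: xx0; have := ipDl 1 0 0 b; rewrite scaler0 addr0 mul1r.
by have := ipDl c a 0 b; rewrite addr0 H0 addr0.
Qed.

Lemma ipZr c a b : ip a (c *: b) = c * ip a b.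
Proof. by rewrite ipsym ipZl ipsym. Qed.

Lemma wzl a : w z a = 0.
Proof. by rewrite wsk wz oppr0. Qed.

Lemma CE_eq x0 x1 x2 x3 :
  CE_d3 br (torsion br J ip) x0 x1 x2 x3 =
  2 * ip z z * (w x0 x1 * w x2 x3 - w x0 x2 * w x1 x3 + w x0 x3 * w x1 x2).
Proof.
rewrite /CE_d3 /torsion !brE !wJ !wZl ?wZr ?wzl ?wz ?mulr0 !ipZl ?ipZr.
idtac.
ring.
Qed.

End Alg.

Lemma iso_Pl n k (br : 'rV[R]_n -> 'rV[R]_n -> 'rV[R]_n) (w : 'rV[R]_n -> 'rV[R]_n -> R) z x y :
  (forall a b, br a b = w a b *: z) -> z != 0 -> w x y = 1 ->
  lie_isomorphic br (@abelian_plus_h3_bracket R k) -> Pl w.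
Proof.
move=> brE z0 wxy [F [Flin Fbij Fhom]].
have F0 : F 0 = 0.
  have H : F 0 = F 0 + F 0 by have := Flin 1 0 0; rewrite scaler0 addr0 scale1r.
  apply/rowP=> i; rewrite [RHS]mxE; apply: xx0; by rewrite {1}H mxE.
have FZ a u : F (a *: u) = a *: F u by rewrite -[a *: u]addr0 Flin F0 addr0.
pose al u : R := F u 0 (inord 0); pose be u : R := F u 0 (inord 1).
pose c : R := F z 0 (inord 2).
have key u v : w u v * c = al u * be v - be u * al v.
  have := congr1 (fun r : 'rV[R]_(k.+3) => r 0 (inord 2)) (Fhom u v).
  by rewrite /= brE FZ /abelian_plus_h3_bracket !mxE !eqxx mulr1.
have c0 : c != 0.
  apply/negP => /eqP c0.
  have Fz : F z = 0.
    have := Fhom x y; rewrite brE wxy scale1r => ->.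
    rewrite /abelian_plus_h3_bracket.
    have := key x y; rewrite c0 mulr0 => <-.
    by rewrite scale0r.
  have : F z = F 0 by rewrite Fz F0.
  by move/(bij_inj Fbij) => zE; rewrite zE eqxx in z0.
have wE u v : w u v = (al u * be v - be u * al v) / c.
  by rewrite -key mulfK.
move=> a b e f; rewrite !wE; ring.
Qed.
Lemma sum3 (f : 'I_3 -> R) : \sum_i f i = f (inord 0) + f (inord 1) + f (inord 2).
Proof.
rewrite !big_ord_recr big_ord0 /= add0r.
congr (_ + _ + _); congr (f _); apply: val_inj; rewrite /= inordK. all: done.
Qed.

Lemma three_le n (br : 'rV[R]_(n) -> 'rV[R]_(n) -> 'rV[R]_(n))
   (w : 'rV[R]_(n) -> 'rV[R]_(n) -> R) z x y i0 :
  (forall a b, br a b = w a b *: z) ->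
  (forall (c : R) a b e, w (c *: a + b) e = c * w a e + w b e) ->
  (forall a b, w a b = - w b a) ->
  (forall a, w a z = 0) -> z 0 i0 != 0 -> w x y = 1 -> Pl w ->
  (3 <= n)%N.
Proof.
move=> brE wDl wsk wz zi0 wxy Pw.
have wzl a : w z a = 0 by rewrite wsk wz oppr0.
have wxx a : w a a = 0 by apply/eqP; rewrite -[_ == 0](mulrn_eq0 _ 2) mulr2n {1}wsk addNr.
have wDr c a b e : w e (c *: a + b) = c * w e a + w e b.
  by rewrite wsk wDl (wsk a) (wsk b); ring.
pose Phi (i : nat) (u : 'rV[R]_(n)) : R :=
  if i == 0%N then w u y else if i == 1%N then w x u else u 0 i0 / z 0 i0.
have Phil i a u v : Phi i (a *: u + v) = a * Phi i u + Phi i v.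
  rewrite /Phi; case: ifP => _; first by rewrite wDl.
  case: ifP => _; first by rewrite wDr.
  by rewrite !mxE mulrDl mulrA.
pose A : 'M[R]_(3, n) := \matrix_(i, j) Phi i (delta_mx 0 j).
have AE (i : 'I_3) (u : 'rV[R]_(n)) : \sum_j u 0 j * A i j = Phi i u.
  by rewrite (lin_sum (Phil i) u); apply: eq_bigr => j _; rewrite mxE.
have rfA : row_free A.
  apply/inj_row_free => v vA0.
  have H u : \sum_(i < 3) v 0 i * Phi i u = 0.
    have : (v *m A *m u^T) 0 0 = 0 by rewrite vA0 mul0mx mxE.
    rewrite -mulmxA mxE => H0; apply: eq_trans H0; apply: eq_bigr => i _; rewrite mxE -AE.
    by congr (_ * _); apply: eq_bigr => j _; rewrite !mxE mulrC.
  have H3 u : v 0 (inord 0) * Phi 0%N u + v 0 (inord 1) * Phi 1%N u + v 0 (inord 2) * Phi 2%N u = 0.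
    by rewrite -(H u) sum3 !inordK.
  have Hz := H3 z; have Hx := H3 x; have Hy := H3 y.
  rewrite /Phi /= in Hz Hx Hy.
  rewrite wzl wz divff // !mulr0 mulr1 !add0r in Hz.
  rewrite Hz wxy wxx !mul0r mulr1 mulr0 !addr0 in Hx.
  rewrite Hz Hx wxy !mul0r mulr1 addr0 add0r in Hy.
  apply/rowP => i; rewrite mxE.
  have : i = inord 0 \/ i = inord 1 \/ i = inord 2.
    case: i => [[|[|[|m]]] Hm] //.
    - by left; apply: val_inj; rewrite /= inordK.
    - by right; left; apply: val_inj; rewrite /= inordK.
    - by right; right; apply: val_inj; rewrite /= inordK.
  by case=> [->|[->|->]].
by rewrite -(eqP rfA) rank_leq_col.
Qed.

Lemma construct k (br : 'rV[R]_(k.+3) -> 'rV[R]_(k.+3) -> 'rV[R]_(k.+3))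
   (w : 'rV[R]_(k.+3) -> 'rV[R]_(k.+3) -> R) z x y i0 :
  (forall a b, br a b = w a b *: z) ->
  (forall (c : R) a b e, w (c *: a + b) e = c * w a e + w b e) ->
  (forall a b, w a b = - w b a) ->
  (forall a, w a z = 0) -> z 0 i0 != 0 -> w x y = 1 -> Pl w ->
  lie_isomorphic br (@abelian_plus_h3_bracket R k).
Proof.
move=> brE wDl wsk wz zi0 wxy Pw.
have wzl a : w z a = 0 by rewrite wsk wz oppr0.
have wxx a : w a a = 0 by apply/eqP; rewrite -[_ == 0](mulrn_eq0 _ 2) mulr2n {1}wsk addNr.
have wDr c a b e : w e (c *: a + b) = c * w e a + w e b.
  by rewrite wsk wDl (wsk a) (wsk b); ring.
pose Phi (i : nat) (u : 'rV[R]_(k.+3)) : R :=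
  if i == 0%N then w u y else if i == 1%N then w x u else u 0 i0 / z 0 i0.
have Phil i a u v : Phi i (a *: u + v) = a * Phi i u + Phi i v.
  rewrite /Phi; case: ifP => _; first by rewrite wDl.
  case: ifP => _; first by rewrite wDr.
  by rewrite !mxE mulrDl mulrA.
pose A : 'M[R]_(3, k.+3) := \matrix_(i, j) Phi i (delta_mx 0 j).
have AE (i : 'I_3) (u : 'rV[R]_(k.+3)) : \sum_j u 0 j * A i j = Phi i u.
  by rewrite (lin_sum (Phil i) u); apply: eq_bigr => j _; rewrite mxE.
have rfA : row_free A.
  apply/inj_row_free => v vA0.
  have H u : \sum_(i < 3) v 0 i * Phi i u = 0.
    have : (v *m A *m u^T) 0 0 = 0 by rewrite vA0 mul0mx mxE.
    rewrite -mulmxA mxE => H0; apply: eq_trans H0; apply: eq_bigr => i _; rewrite mxE -AE.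
    by congr (_ * _); apply: eq_bigr => j _; rewrite !mxE mulrC.
  have H3 u : v 0 (inord 0) * Phi 0%N u + v 0 (inord 1) * Phi 1%N u + v 0 (inord 2) * Phi 2%N u = 0.
    by rewrite -(H u) sum3 !inordK.
  have Hz := H3 z; have Hx := H3 x; have Hy := H3 y.
  rewrite /Phi /= in Hz Hx Hy.
  rewrite wzl wz divff // !mulr0 mulr1 !add0r in Hz.
  rewrite Hz wxy wxx !mul0r mulr1 mulr0 !addr0 in Hx.
  rewrite Hz Hx wxy !mul0r mulr1 addr0 add0r in Hy.
  apply/rowP => i; rewrite mxE.
  have : i = inord 0 \/ i = inord 1 \/ i = inord 2.
    case: i => [[|[|[|m]]] Hm] //.
    - by left; apply: val_inj; rewrite /= inordK.
    - by right; left; apply: val_inj; rewrite /= inordK.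
    - by right; right; apply: val_inj; rewrite /= inordK.
  by case=> [->|[->|->]].
have rkA : \rank A = 3%N by apply/eqP.
have rkC : \rank (A^C)%MS = k by rewrite mxrank_compl rkA subSS subSS subSS subn0.
pose B : 'M[R]_(k, k.+3) := castmx (rkC, erefl (k.+3)) (row_base (A^C)%MS).
pose Q : 'M[R]_(k.+3) := col_mx A B.
have rkQ : \rank Q = k.+3.
  have -> : \rank Q = \rank (A + A^C)%MS.
    apply/eqmx_rank/eqmxP; apply: eqmx_trans (eqmx_sym (addsmxE A B)) _.
    apply: adds_eqmx => //.
    exact: eqmx_trans (eqmx_cast _ _) (eq_row_base _).
  by apply/eqP; apply: addsmx_compl_full.
have QA (i : 'I_3) j : Q (lshift k i) j = A i j := col_mxEu _ _ _ _.
pose cc (i : 'I_(k.+3)) : R := if (3 <= i)%N then \sum_l z 0 l * Q i l else 0.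
pose i2 : 'I_(k.+3) := inord 2.
have i2E : i2 = lshift k (inord 2 : 'I_3) by apply: val_inj; rewrite /= !inordK.
pose Q2 : 'M[R]_(k.+3) := \matrix_(i, j) (Q i j - cc i * Q i2 j).
have cc2 : cc i2 = 0 by rewrite /cc inordK.
have ccl (i : 'I_3) : cc (lshift k i) = 0 by rewrite /cc /= leqNgt ltn_ord.
have QE : Q = (1%:M + (\col_i cc i) *m delta_mx 0 i2) *m Q2.
  apply/matrixP => i j; rewrite mulmxDl mul1mx -mulmxA -rowE !mxE big_ord1 !mxE cc2.
  ring.
have uQ2 : Q2 \in unitmx.
  rewrite -row_full_unit /row_full eqn_leq rank_leq_col /= -{1}rkQ QE.
  exact: mxrankM_maxr.
pose M := Q2^T.
have Mu : M \in unitmx by rewrite unitmx_tr.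
have Q2E i j : Q2 i j = Q i j - cc i * Q i2 j by rewrite !mxE.
have ME l j : M l j = Q2 j l by rewrite !mxE.
have FE u (i : 'I_3) : (u *m M) 0 (lshift k i) = Phi i u.
  rewrite mxE -AE; apply: eq_bigr => l _; by rewrite ME Q2E QA ccl mul0r subr0.
have Q2z : \sum_l z 0 l * Q i2 l = 1.
  by rewrite i2E (eq_bigr _ (fun l _ => congr1 _ (QA _ l))) AE /Phi inordK //= divff.
have zM : z *m M = delta_mx 0 i2.
  apply/rowP => j; rewrite !mxE.
  have -> : \sum_l z 0 l * M l j = \sum_l z 0 l * Q j l - cc j * \sum_l z 0 l * Q i2 l.
    rewrite mulr_sumr -sumrB; apply: eq_bigr => l _; rewrite ME Q2E; ring.
  rewrite Q2z mulr1.
  case: (ltnP j 3) => Hj.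
    have -> : j = lshift k (Ordinal Hj) by apply: val_inj.
    rewrite ccl subr0 (eq_bigr _ (fun l _ => congr1 _ (QA _ l))) AE /Phi /=.
    rewrite -val_eqE /= /i2 inordK //.
    by case: j Hj => [[|[|[|m]]]] //= _ _; rewrite ?wzl ?wz ?divff.
  rewrite /cc Hj subrr.
  have /negbTE -> : j != i2 by apply/eqP => E; move: Hj; rewrite E /i2 inordK.
  by rewrite andbF.
have i0E : (inord 0 : 'I_(k.+3)) = lshift k (inord 0 : 'I_3) by apply: val_inj; rewrite /= !inordK.
have i1E : (inord 1 : 'I_(k.+3)) = lshift k (inord 1 : 'I_3) by apply: val_inj; rewrite /= !inordK.
exists (fun u => u *m M); split.
- by move=> a u v; rewrite mulmxDl scalemxAl.
- by exists (fun v => v *m invmx M) => u; [rewrite mulmxK | rewrite mulmxKV].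
move=> u v; rewrite brE -scalemxAl zM /abelian_plus_h3_bracket.
rewrite i0E i1E !FE /Phi !inordK //=.
congr (_ *: _).
have := Pw u v x y; rewrite wxy (wsk x v) (wsk x u) => h.
rewrite -[LHS]subr0 -h; ring.
Qed.

Lemma construct_n n (br : 'rV[R]_n -> 'rV[R]_n -> 'rV[R]_n)
   (w : 'rV[R]_n -> 'rV[R]_n -> R) z x y i0 :
  (forall a b, br a b = w a b *: z) ->
  (forall (c : R) a b e, w (c *: a + b) e = c * w a e + w b e) ->
  (forall a b, w a b = - w b a) ->
  (forall a, w a z = 0) -> z 0 i0 != 0 -> w x y = 1 -> Pl w ->
  lie_isomorphic br (@abelian_plus_h3_bracket R (n - 3)).
Proof.
move=> brE wDl wsk wz zi0 wxy Pw.
have h3 := three_le brE wDl wsk wz zi0 wxy Pw.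
have e : n = ((n - 3).+3)%N by rewrite -[in LHS](subnKC h3).
move: (n - 3)%N e => k e; subst n.
exact: construct brE wDl wsk wz zi0 wxy Pw.
Qed.

Lemma nil_wz n (br : 'rV[R]_n -> 'rV[R]_n -> 'rV[R]_n) (w : 'rV[R]_n -> 'rV[R]_n -> R) z :
  (forall a b, br a b = w a b *: z) ->
  (forall (c : R) a b e, w (c *: a + b) e = c * w a e + w b e) ->
  (forall a b, w a b = - w b a) -> z != 0 ->
  is_nilpotent br -> forall a, w a z = 0.
Proof.
move=> brE wDl wsk z0 [k Hk] a.
have wZr c u v : w u (c *: v) = c * w u v.
  have H0 t : w 0 t = 0 by apply: xx0; have := wDl 1 0 0 t; rewrite scaler0 addr0 mul1r.
  rewrite wsk (wsk u v); have := wDl c v 0 u; rewrite addr0 H0 addr0 => ->; by rewrite mulrN.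
pose xs (i : nat) := if i is 0 then z else a.
have E m : lcs_elt br m xs = (w a z ^+ m) *: z.
  elim: m => [|m IH] /=; first by rewrite expr0 scale1r.
  by rewrite brE IH wZr exprSr mulrC.
have := Hk xs; rewrite E => /eqP; rewrite scaler_eq0 (negbTE z0) orbF expf_eq0.
by case/andP => _ /eqP.
Qed.

Lemma wJ_lemma n (br : 'rV[R]_n -> 'rV[R]_n -> 'rV[R]_n) (w : 'rV[R]_n -> 'rV[R]_n -> R) z J :
  (forall a b, br a b = w a b *: z) -> z != 0 ->
  is_complex_structure br J -> forall a b, w (a *m J) (b *m J) = w a b.
Proof.
move=> brE z0 [HJ Hint] a b.
have := Hint a b; rewrite !brE -scalerDl -scalemxAl.
set A := w a b; set B := w (a *m J) b + w a (b *m J); set C := w (a *m J) (b *m J).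
move=> e1.
have e2 : (A - C) *: z + B *: (z *m J) = 0.
  by rewrite -e1 scalerBl addrAC.
have e3 : (A - C) *: (z *m J) - B *: z = 0.
  have := congr1 (fun r => r *m J) e2.
  by rewrite mulmxDl -!scalemxAl -mulmxA HJ mulmxN mulmx1 mul0mx scalerN.
have e4 : ((A - C) ^+ 2 + B ^+ 2) *: z = 0.
  have := congr1 (fun r => (A - C) *: r) e2; have := congr1 (fun r => B *: r) e3.
  rewrite !scalerDr !scalerN !scalerA !scaler0 => h1 h2.
  rewrite -[RHS](subr0 0) -[X in _ = X - _]h2 -[X in _ = _ - X]h1.
  by apply/rowP => i; rewrite !mxE; ring.
move: e4 => /eqP; rewrite scaler_eq0 (negbTE z0) orbF => /eqP h.
have : A - C = 0 by nra.
by move/eqP; rewrite subr_eq0 => /eqP.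
Qed.

End S.

Unset Implicit Arguments.
Theorem mainTheorem17 (R : realType) (d : nat)
    (br : 'rV[R]_(2 * d) -> 'rV[R]_(2 * d) -> 'rV[R]_(2 * d))
    (J : 'M[R]_(2 * d)) (ip : 'rV[R]_(2 * d) -> 'rV[R]_(2 * d) -> R) :
  is_lie_bracket br -> is_nilpotent br -> derived_dim_one br ->
  is_complex_structure br J -> is_inner_product ip -> is_hermitian J ip ->
  (is_pluriclosed br J ip <->
   lie_isomorphic br (@abelian_plus_h3_bracket R (2 * d - 3))).
Proof.
move=> [bDl bDr bsk bjac] Hnil [z [z0 [Hspan [x [y Hxy]]]]] HJ [ipDl ipsym ippos] Hherm.
have [i0 zi0] : exists i0, z 0 i0 != 0.
  have : ~~ [forall i, z 0 i == 0].
    apply/negP => /forallP H; move/negP: z0; apply; apply/eqP/rowP => i; rewrite mxE; exact/eqP.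
  by case/forallPn => i Hi; exists i.
pose w u v : R := br u v 0 i0 / z 0 i0.
have brE a b : br a b = w a b *: z.
  rewrite /w; have [c ->] := Hspan a b; by rewrite mxE mulfK.
have wDl c a b e : w (c *: a + b) e = c * w a e + w b e.
  by rewrite /w bDl !mxE mulrDl mulrA.
have wsk a b : w a b = - w b a by rewrite /w bsk mxE mulNr.
have wz := nil_wz brE wDl wsk z0 Hnil.
have wJ := wJ_lemma brE z0 HJ.
have wxy : w x y = 1 by rewrite /w Hxy divff.
have PC : is_pluriclosed br J ip <-> Pl w.
  have zz : 0 < ip z z := ippos z z0.
  split => H.
  - move=> a b c e; have := H a b c e.
    rewrite (CE_eq brE wDl wsk wz wJ ipDl ipsym) => /eqP.
    by rewrite mulf_eq0 mulf_eq0 pnatr_eq0 /= (gt_eqF zz) => /eqP.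
  - move=> a b c e; rewrite (CE_eq brE wDl wsk wz wJ ipDl ipsym) H mulr0 //.
rewrite PC; split.
- exact: construct_n brE wDl wsk wz zi0 wxy.
- exact: iso_Pl brE z0 wxy.
Qed.
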